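(* Let $O$ be a validated totally-ordered object, $S$ a sequence of operations, $i\neq j$ processes, and $op_i, op_j\notin S$ operations issued by $i$ and $j$ respectively, with $\mathrm{valid}(S,op_i,i)=\mathit{True}$, $\mathrm{valid}(S,op_j,j)=\mathit{True}$, $\mathrm{valid}(S\|op_j,op_i,i)=\mathit{False}$ and $\mathrm{valid}(S\|op_i,op_j,j)=\mathit{True}$. Then, in an asynchronous system in which at most one of $i,j$ crashes, the following algorithm solves consensus between $i$ and $j$ (every correct one decides, both decide the same value, and it was proposed by $i$ or $j$). Setup: $O$ is initialized with state $S$; $c_i, c_j$ are reliable atomic SWMR registers written only by $i$ resp. $j$, initially $\bot$. For each process $k\in\{i,j\}$ there are reliable SWMR vectors $oplist_k$ (written only by $k$) and $reslist_k$ (written only by $O$), all entries initially $\bot$. LoggedApply$(op,k)$ at process $k$, with local counter $c_k$ starting at $1$: write $op$ into $oplist_k[c_k]$, wait until $reslist_k[c_k]\neq\bot$, read it as $res$, increment $c_k$, return $res$. The object runs, for each $k$, a task with its own counter $d_k$ starting at $1$: repeatedly wait until $oplist_k[d_k]\neq\bot$, read $op$ from it, compute $res\leftarrow O.\mathrm{apply}(op,k)$, write $res$ into $reslist_k[d_k]$, increment $d_k$. Process $i$, proposing $v_1$: write $v_1$ to $c_i$; $res\leftarrow$ LoggedApply$(op_i,i)$; if $res=(\mathit{NACK},-)$ read $v_2$ from $c_j$ and decide it, else decide $v_1$. Process $j$, proposing $v_2$: write $v_2$ to $c_j$; $res\leftarrow$ LoggedApply$(op_j,j)$; if there is an index $c$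 with $oplist_i[c]=op_i$, then wait until $reslist_i[c]\neq\bot$, read it as $opires$, and if $opires=(\mathit{ACK},r)$ read $v_1$ from $c_i$ and decide $v_1$, while if $opires=(\mathit{NACK},-)$ decide $v_2$; if there is no such index, decide $v_2$.
   Context: Validated object: given a predicate $\mathrm{valid}(\cdot, op, i)$ and function $\mathrm{execute}(\cdot, op, i)$, first argument a strictly partially ordered set of operations (a sequence when totally ordered), $op$ an operation, $i$ its issuer. Clients use $\mathrm{apply}(op,i)$, returning $(\mathit{ACK}, r)$ if $op$ is found valid and executed with result $r$, and $(\mathit{NACK},-)$ otherwise. For a sequence $S$, $S\|op$ denotes $S$ followed by $op$. The history of a run contains only operations for which $\mathrm{apply}$ returns $\mathit{ACK}$; $C(R)$ is the set of complete such operations; $op\rightarrow op'$ means the response of $op$ precedes the invocation of $op'$. Validated totally-ordered object: in every run $R$ there is a total order $\ll$ on $C(R)$ such that (1) $op\rightarrow op'$ implies $op\ll op'$; (2) for every $op\in C(R)$ issued by $i$, with $P(op)=\{op'\in C(R): op'\ll op\}$, $\mathrm{valid}(\langle P(op),\ll\rangle,op,i)=\mathit{True}$ and $op$ returns $\mathrm{execute}(\langle P(op),\ll\rangle,op,i)$. The object $O$ and the shared memory are assumed reliable (never fail). *)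

(* Defs.v *)
From mathcomp Require Import all_boot.

(** Each step performs one access to shared
    memory / one atomic [O.apply]. *)

Inductive resp (Res : Type) : Type :=
| ACK : Res -> resp Res
| NACK : resp Res.
Arguments ACK {Res} _.
Arguments NACK {Res}.

Inductive side : Type := Si | Sj.

Definition updS {A : Type} (f : side -> A) (k : side) (x : A) : side -> A :=
  fun k' => match k, k' with
            | Si, Si => x | Sj, Sj => x | _, _ => f k' end.

(** write into a (unbounded, 1-indexed) SWMR vector *)
Definition updV {A : Type} (f : nat -> option A) (n : nat) (x : A) : nat -> option A :=
  fun m => if m == n then Some x else f m.

Inductive agent : Type := AgI | AgJ | AgTask of side.

Section Algorithm.

Variables (Op : eqType) (Res Val Proc : Type).

Inductive pcI : Type :=
| I_write_c | I_write_op | I_wait_res | I_branch of resp Res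
| I_decided of option Val.

Inductive pcJ : Type :=
| J_write_c | J_write_op | J_wait_res | J_check | J_wait_opi of nat
| J_read_ci | J_decided of option Val.

Inductive pcT : Type := T_wait | T_apply of Op | T_write of resp Res.

Record task : Type := Task { tpc : pcT; tcnt : nat }.

Record config : Type := Config {
  creg    : side -> option Val;
  oplist  : side -> nat -> option Op;
  reslist : side -> nat -> option (resp Res);
  ostate  : seq Op;
  st_i    : pcI; cnt_i : nat;
  st_j    : pcJ; cnt_j : nat;
  tasks   : side -> task
}.

Definition set_creg s x := Config x (oplist s) (reslist s) (ostate s) (st_i s) (cnt_i s) (st_j s) (cnt_j s) (tasks s).
Definition set_oplist s x := Config (creg s) x (reslist s) (ostate s) (st_i s) (cnt_i s) (st_j s) (cnt_j s) (tasks s).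
Definition set_reslist s x := Config (creg s) (oplist s) x (ostate s) (st_i s) (cnt_i s) (st_j s) (cnt_j s) (tasks s).
Definition set_ostate s x := Config (creg s) (oplist s) (reslist s) x (st_i s) (cnt_i s) (st_j s) (cnt_j s) (tasks s).
Definition set_i s x n := Config (creg s) (oplist s) (reslist s) (ostate s) x n (st_j s) (cnt_j s) (tasks s).
Definition set_j s x n := Config (creg s) (oplist s) (reslist s) (ostate s) (st_i s) (cnt_i s) x n (tasks s).
Definition set_tasks s x := Config (creg s) (oplist s) (reslist s) (ostate s) (st_i s) (cnt_i s) (st_j s) (cnt_j s) x.

Definition init_config (S : seq Op) : config :=
  Config (fun _ => None) (fun _ _ => None) (fun _ _ => None) S
         I_write_c 1 J_write_c 1 (fun _ => Task T_wait 1).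

Variables (valid : seq Op -> Op -> Proc -> bool)
          (execute : seq Op -> Op -> Proc -> Res)
          (i j : Proc) (op_i op_j : Op) (v1 v2 : Val).

Definition proc_of (k : side) : Proc := match k with Si => i | Sj => j end.

Definition step_i (s s' : config) : Prop :=
  match st_i s with
  | I_write_c => s' = set_i (set_creg s (updS (creg s) Si (Some v1))) I_write_op (cnt_i s)
  | I_write_op =>
      s' = set_i (set_oplist s (updS (oplist s) Si (updV (oplist s Si) (cnt_i s) op_i)))
                 I_wait_res (cnt_i s)
  | I_wait_res =>
      match reslist s Si (cnt_i s) with
      | None => s' = s
      | Some r => s' = set_i s (I_branch r) (cnt_i s).+1
      end
  | I_branch (ACK _) => s' = set_i s (I_decided (Some v1)) (cnt_i s)
  | I_branch NACK => s' = set_i s (I_decided (creg s Sj)) (cnt_i s)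
  | I_decided _ => s' = s
  end.

Definition step_j (s s' : config) : Prop :=
  match st_j s with
  | J_write_c => s' = set_j (set_creg s (updS (creg s) Sj (Some v2))) J_write_op (cnt_j s)
  | J_write_op =>
      s' = set_j (set_oplist s (updS (oplist s) Sj (updV (oplist s Sj) (cnt_j s) op_j)))
                 J_wait_res (cnt_j s)
  | J_wait_res =>
      match reslist s Sj (cnt_j s) with
      | None => s' = s
      | Some _ => s' = set_j s J_check (cnt_j s).+1
      end
  | J_check =>
      (exists c, oplist s Si c = Some op_i /\ s' = set_j s (J_wait_opi c) (cnt_j s))
      \/ ((forall c, oplist s Si c <> Some op_i) /\ s' = set_j s (J_decided (Some v2)) (cnt_j s))
  | J_wait_opi c =>
      match reslist s Si c with
      | None => s' = s
      | Some (ACK _) => s' = set_j s J_read_ci (cnt_j s)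
      | Some NACK => s' = set_j s (J_decided (Some v2)) (cnt_j s)
      end
  | J_read_ci => s' = set_j s (J_decided (creg s Si)) (cnt_j s)
  | J_decided _ => s' = s
  end.

Definition step_task (k : side) (s s' : config) : Prop :=
  let t := tasks s k in
  match tpc t with
  | T_wait =>
      match oplist s k (tcnt t) with
      | None => s' = s
      | Some op => s' = set_tasks s (updS (tasks s) k (Task (T_apply op) (tcnt t)))
      end
  | T_apply op =>
      if valid (ostate s) op (proc_of k) then
        s' = set_tasks (set_ostate s (rcons (ostate s) op))
               (updS (tasks s) k (Task (T_write (ACK (execute (ostate s) op (proc_of k)))) (tcnt t)))
      else
        s' = set_tasks s (updS (tasks s) k (Task (T_write NACK) (tcnt t)))
  | T_write r =>
      s' = set_tasks (set_reslist s (updS (reslist s) k (updV (reslist s k) (tcnt t) r)))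
             (updS (tasks s) k (Task T_wait (tcnt t).+1))
  end.

Definition step (a : agent) (s s' : config) : Prop :=
  match a with
  | AgI => step_i s s'
  | AgJ => step_j s s'
  | AgTask k => step_task k s s'
  end.

Definition is_run (S : seq Op) (cfg : nat -> config) (sched : nat -> agent) : Prop :=
  cfg 0 = init_config S /\ forall n, step (sched n) (cfg n) (cfg n.+1).

End Algorithm.

(** agent [a] takes infinitely many steps (i.e. is correct / does not crash) *)
Definition inf_often (sched : nat -> agent) (a : agent) : Prop :=
  forall n, exists m, n <= m /\ sched m = a.

(** admissible run: O (both tasks) is reliable, at most one of i, j crashes *)
Definition admissible (sched : nat -> agent) : Prop :=
  inf_often sched (AgTask Si) /\ inf_often sched (AgTask Sj) /\
  (inf_often sched AgI \/ inf_often sched AgJ).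

Arguments I_decided {Res Val} _.
Arguments J_decided {Val} _.
Arguments is_run {Op Res Val Proc} valid execute i j op_i op_j v1 v2 S cfg sched.
Arguments st_i {Op Res Val} _.
Arguments st_j {Op Res Val} _.

(* Main.v *)
Require Import Defs.
From mathcomp Require Import all_boot.

Set Implicit Arguments.
Arguments creg {Op Res Val} _ _.
Arguments oplist {Op Res Val} _ _ _.
Arguments reslist {Op Res Val} _ _ _.
Arguments ostate {Op Res Val} _.
Arguments cnt_i {Op Res Val} _.
Arguments cnt_j {Op Res Val} _.
Arguments tasks {Op Res Val} _ _.
Arguments tpc {Op Res} _.
Arguments tcnt {Op Res} _.
Arguments Task {Op Res} _ _.
Arguments I_branch {Res Val} _.
Arguments I_write_c {Res Val}.
Arguments I_write_op {Res Val}.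
Arguments I_wait_res {Res Val}.
Arguments J_write_c {Val}.
Arguments J_write_op {Val}.
Arguments J_wait_res {Val}.
Arguments J_check {Val}.
Arguments J_wait_opi {Val} _.
Arguments J_read_ci {Val}.
Arguments T_wait {Op Res}.
Arguments T_apply {Op Res} _.
Arguments T_write {Op Res} _.
Unset Strict Implicit.

Section Proof.
Variables (Op : eqType) (Res Val : Type) (Proc : eqType)
  (valid : seq Op -> Op -> Proc -> bool)
  (execute : seq Op -> Op -> Proc -> Res)
  (S : seq Op) (i j : Proc) (op_i op_j : Op).
Hypothesis (H1 : valid S op_i i = true)
  (H2 : valid S op_j j = true)
  (H3 : valid (rcons S op_j) op_i i = false)
  (H4 : valid (rcons S op_i) op_j j = true).
Variables (v1 v2 : Val).

Notation C := (config Op Res Val).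

Definition stI (s : C) : nat := match st_i s with
  | I_write_c => 0 | I_write_op => 1 | I_wait_res => 2 | I_branch _ => 3 | I_decided _ => 4 end.
Definition stJ (s : C) : nat := match st_j s with
  | J_write_c => 0 | J_write_op => 1 | J_wait_res => 2 | J_check => 3 | J_wait_opi _ => 4
  | J_read_ci => 5 | J_decided _ => 6 end.
Definition tM (s : C) k : nat := match tasks s k with
  | Task T_wait n => if n == 1 then 0 else 3
  | Task (T_apply _) _ => 1 | Task (T_write _) _ => 2 end.
Definition res_of (s : C) k := match tpc (tasks s k) with
  | T_write r => Some r | _ => reslist s k 1 end.
Definition opk k := match k with Si => op_i | Sj => op_j end.
Definition wr (s : C) k := match k with Si => 1 < stI s | Sj => 1 < stJ s end.
Definition dec_of (r : resp Res) := match r with ACK _ => Some v1 | NACK => Some v2 end.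

Definition TaskInv (s : C) k :=
 (tasks s k = Task T_wait 1 /\ reslist s k 1 = None)
 \/ (tasks s k = Task (T_apply (opk k)) 1 /\ reslist s k 1 = None /\ wr s k)
 \/ (exists r, tasks s k = Task (T_write r) 1 /\ reslist s k 1 = None /\ wr s k)
 \/ (tasks s k = Task T_wait 2 /\ reslist s k 1 <> None /\ wr s k).

Definition OInv (s : C) :=
   (res_of s Si = None /\ res_of s Sj = None /\ ostate s = S)
 \/ (exists r, res_of s Si = Some (ACK r) /\ res_of s Sj = None /\ ostate s = rcons S op_i)
 \/ (exists r, res_of s Si = None /\ res_of s Sj = Some (ACK r) /\ ostate s = rcons S op_j)
 \/ (exists r r', res_of s Si = Some (ACK r) /\ res_of s Sj = Some (ACK r') /\ ostate s = rcons (rcons S op_i) op_j)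
 \/ (exists r', res_of s Si = Some NACK /\ res_of s Sj = Some (ACK r') /\ ostate s = rcons S op_j).

Record Inv (s : C) : Prop := {
  iv_ci : creg s Si = (if 0 < stI s then Some v1 else None);
  iv_cj : creg s Sj = (if 0 < stJ s then Some v2 else None);
  iv_op : forall k n, oplist s k n = (if (n == 1) && wr s k then Some (opk k) else None);
  iv_cnti : cnt_i s = (if 2 < stI s then 2 else 1);
  iv_cntj : cnt_j s = (if 2 < stJ s then 2 else 1);
  iv_res : forall k n, n != 1 -> reslist s k n = None;
  iv_task : forall k, TaskInv s k;
  iv_o : OInv s;
  iv_ib : forall r, st_i s = I_branch r -> reslist s Si 1 = Some r;
  iv_id : forall d, st_i s = I_decided d -> exists r, reslist s Si 1 = Some r /\ d = dec_of r;
  iv_jr : 2 < stJ s -> reslist s Sj 1 <> None;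
  iv_jw : forall c, st_j s = J_wait_opi c -> c = 1 /\ 1 < stI s;
  iv_jc : st_j s = J_read_ci -> exists r, reslist s Si 1 = Some (ACK r);
  iv_jd : forall d, st_j s = J_decided d ->
      (d = Some v2 /\ (res_of s Si = None \/ res_of s Si = Some NACK)) \/
      (d = Some v1 /\ exists r, res_of s Si = Some (ACK r))
}.

Lemma Inv_init : Inv (@init_config Op Res Val S).
Proof.
constructor => //=.
all: try by case.
all: try by move=> [] n; rewrite andbF.
all: try by left.
Qed.

Notation stp := (@step Op Res Val Proc valid execute i j op_i op_j v1 v2).

Ltac unf := unfold set_i, set_j, set_creg, set_oplist, set_reslist, set_ostate, set_tasks, TaskInv, OInv, res_of, wr, opk, dec_of, stI, stJ, updV in *.


Ltac fin := constructor; unf; simpl in *; try done.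
Ltac show := match goal with |- ?g => idtac "GOAL:" g end.

Lemma L_res s k r : Inv s -> reslist s k 1 = Some r -> res_of s k = Some r.
Proof.
case=> _ _ _ _ _ _ tk _ _ _ _ _ _ _; rewrite /res_of.
case: (tk k) => [[-> ->]|[[-> [-> _]]|[[r0 [-> [-> _]]]|[-> _]]]] //.
Qed.

Lemma L_wr s k : Inv s -> res_of s k <> None -> wr s k.
Proof.
case=> _ _ _ _ _ _ tk _ _ _ _ _ _ _; rewrite /res_of.
case: (tk k) => [[-> ->]|[[-> [-> _]]|[[r0 [-> [_ ->]]]|[-> [_ ->]]]]] //.
Qed.

Lemma L_nack s : Inv s -> res_of s Si = Some NACK -> res_of s Sj <> None.
Proof.
case=> _ _ _ _ _ _ _ oi _ _ _ _ _ _.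
by case: oi => [[->]|[[r [->]]|[[r [->]]|[[r [r' [->]]]|[r' [_ [->]]]]]]].
Qed.

Lemma Inv_stepI s s' : Inv s -> stp AgI s s' -> Inv s'.
Proof.
move=> Hinv.
have X1 : reslist s Si 1 = Some NACK -> 1 < stJ s.
  by move=> h; apply: (@L_wr s Sj Hinv); apply: (L_nack Hinv); apply: L_res h.
move: Hinv X1.
case: s => cr ol rl os si ni sj nj tk.
case: si => [||| r | d]; case=> ci cj op cnti cntj res tkI oi ib id jr jw jc jd X1;
 rewrite /= /step_i /=.
{ move=> ->; fin. }
{ move=> ->; fin.
  - case=> n; last exact: op.
    rewrite /updV cnti; case: (n =P 1) => [_|/eqP ne] //; by rewrite op (negbTE ne).
  - case; last exact: tkI.
    by case: (tkI Si) => [?|[[? [? []]]|[[? [? [? []]]]|[? [? []]]]]]; left.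
  - by move=> c /jw [_]. }
{ case H: (rl Si ni) => [r|] ->; fin.
  - by rewrite cnti.
  - by move: H; rewrite cnti => H r0 [<-]. }
{ case E: r => [r'|] ->; fin.
  - by move=> d [<-]; exists r; split; [exact: ib | rewrite E].
  - move=> d [<-]; exists r; split; [exact: ib | rewrite E /=].
    by rewrite cj; move: (X1 (ib NACK ltac:(by rewrite E))); case: (sj). }
{ move=> ->; fin. }

Qed.

Lemma Inv_stepJ s s' : Inv s -> stp AgJ s s' -> Inv s'.
Proof.
move=> Hinv.
have X2 : forall r, reslist s Si 1 = Some r -> res_of s Si = Some r.
  by move=> r; apply: L_res.
have X3 : forall r, reslist s Si 1 = Some r -> 1 < stI s.
  by move=> r h; apply: (@L_wr s Si Hinv); rewrite (X2 _ h).
move: Hinv X2 X3.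
case: s => cr ol rl os si ni sj nj tk.
case: sj => [||||c||d]; case=> ci cj op cnti cntj res tkI oi ib id jr jw jc jd X2 X3;
 rewrite /= /step_j /=.
{ move=> ->; fin. }
{ move=> ->; fin.
  - case=> n; first exact: op.
    rewrite /updV cntj; case: (n =P 1) => [_|/eqP ne] //; by rewrite op (negbTE ne).
  - case; first exact: tkI.
    by case: (tkI Sj) => [?|[[? [? []]]|[[? [? [? []]]]|[? [? []]]]]]; left.
  }
{ case H: (rl Sj nj) => [r|] ->; fin.
  - by rewrite cntj.
  - by move: H; rewrite cntj => H _; rewrite H. }
{ case=> [[c [Hc ->]]|[Hc ->]]; fin.
  - move=> c0 [<-]; move: Hc; rewrite op; case: (c =P 1) => [->|] //=; by case: ifP.
  - move=> d [<-]; left; split => //; left.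
    case: (tkI Si) => [[-> ->]//|[[_ [_ w]]|[[r [_ [_ w]]]|[_ [_ w]]]]]; by case: (Hc 1); rewrite op w. }
{ case H: (rl Si c) => [[r|]|] ->; fin.
  - by have [e _] := jw c erefl; subst c; exists r.
  - move=> d [<-]; left; split=>//; right.
    by have [e _] := jw c erefl; subst c; exact: X2 H. }
{ move=> ->; fin.
  have [r h] := jc erefl.
  move=> d [<-]; right; split.
  - by rewrite ci; move: (X3 _ h); case: (si).
  - by exists r; apply: X2 h. }
{ move=> ->; fin. }
Qed.

Lemma Inv_stepTi s s' : Inv s -> stp (AgTask Si) s s' -> Inv s'.
Proof.
move=> Hinv.
have X4 : res_of s Sj = None -> stJ s <= 2.
  move=> h; rewrite leqNgt; apply/negP => /(iv_jr Hinv) H; apply: H.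
  by case E: (reslist s Sj 1) => [r|] //; rewrite (L_res Hinv E) in h.
move: Hinv X4.
case: s => cr ol rl os si ni sj nj tk Hinv X4.
case: (Hinv) => ci cj op cnti cntj res tkI oi ib id jr jw jc jd;
 rewrite /= /step_task /=.
unf; simpl in *.
case: (tkI Si) => [[E R]|[[E [R W]]|[[r [E [R W]]]|[E [R W]]]]]; rewrite E /=; rewrite E in oi jd.
{ case H: (ol Si 1) => [o|] ->; last exact: Hinv. fin.
  move: H; rewrite op; case: ifP => // w [<-].
  case; last exact: (tkI Sj).
  by right; left. }
{ rewrite R in oi.
  case: oi => [[_ [Rj ->]]|[[r [//]]|[[r [_ [Rj ->]]]|[[r [r' [//]]]|[r' [//]]]]]].
  - rewrite H1 => ->; fin.
    + case; last exact: (tkI Sj). by right; right; left; eexists.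
    + by right; left; eexists.
    + by move=> d Hd; move: (X4 Rj); rewrite Hd.
  - rewrite H3 => ->; fin.
    + case; last exact: (tkI Sj). by right; right; left; eexists.
    + by right; right; right; right; exists r.
    + move=> d Hd; case: (jd d Hd) => [[-> _]|[_ [r0]]]; [by left; split; last right | by rewrite R]. }
{ move=> ->; fin.
  - case=> n ne; last exact: res.
    by rewrite (negbTE ne); exact: res.
  - case; last exact: (tkI Sj).
    by right; right; right.
  - by move=> r0 /ib; rewrite R.
  - by move=> d /id [r0 []]; rewrite R.
  - by move/jc => [r0]; rewrite R. }
{ by rewrite op /= => ->. }
Qed.

Lemma Inv_stepTj s s' : Inv s -> stp (AgTask Sj) s s' -> Inv s'.
Proof.
move=> Hinv.
move: Hinv.
case: s => cr ol rl os si ni sj nj tk Hinv.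
case: (Hinv) => ci cj op cnti cntj res tkI oi ib id jr jw jc jd;
 rewrite /= /step_task /=.
unf; simpl in *.
case: (tkI Sj) => [[E R]|[[E [R W]]|[[r [E [R W]]]|[E [R W]]]]]; rewrite E /=; rewrite E in oi.
{ case H: (ol Sj 1) => [o|] ->; last exact: Hinv. fin.
  move: H; rewrite op; case: ifP => // w [<-].
  case; first exact: (tkI Si).
  by right; left. }
{ rewrite R in oi.
  case: oi => [[Ri [_ ->]]|[[r [Ri [_ ->]]]|[[r [_ [//]]]|[[r [r' [_ [//]]]]|[r' [_ [//]]]]]]].
  - rewrite H2 => ->; fin.
    + case; first exact: (tkI Si). by right; right; left; eexists.
    + by right; right; left; eexists.
  - rewrite H4 => ->; fin.
    + case; first exact: (tkI Si). by right; right; left; eexists.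
    + by right; right; right; left; exists r; eexists. }
{ move=> ->; fin.
  - case=> n ne; first exact: res.
    by rewrite (negbTE ne); exact: res.
  - case; first exact: (tkI Si).
    by right; right; right. }
{ by rewrite op /= => ->. }
Qed.

Lemma Inv_step a s s' : Inv s -> stp a s s' -> Inv s'.
Proof.
case: a => [||[]]; [exact: Inv_stepI|exact: Inv_stepJ|exact: Inv_stepTi|exact: Inv_stepTj].
Qed.

Ltac crunch := repeat (match goal with
 | |- (match ?x with _ => _ end) -> _ => case: x => /=
 | |- _ \/ _ -> _ => case
 | |- (exists _, _) -> _ => case => ?
 | |- _ /\ _ -> _ => case => ?
 | |- (if ?b then _ else _) -> _ => case: b => /=
 | |- _ = _ -> _ => move=> -> /=
 | |- forall _, _ => move=> ?
 end); try done.

Lemma monoI a s s' : stp a s s' -> stI s <= stI s'.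
Proof.
case: s => cr ol rl os si ni sj nj tk.
case: a => [||[]]; rewrite /= /step_i /step_j /step_task /=; unf; case: si => [|||?|?] /=; crunch.
Qed.

Lemma monoJ a s s' : stp a s s' -> stJ s <= stJ s'.
Proof.
case: s => cr ol rl os si ni sj nj tk.
case: a => [||[]]; rewrite /= /step_i /step_j /step_task /=; unf; case: sj => [||||?||?] /=; crunch.
Qed.

Lemma stabI a s s' d : st_i s = I_decided d -> stp a s s' -> st_i s' = I_decided d.
Proof.
case: s => cr ol rl os si ni sj nj tk /= ->.
case: a => [||[]]; rewrite /= /step_i /step_j /step_task /=; unf; crunch.
Qed.

Lemma stabJ a s s' d : st_j s = J_decided d -> stp a s s' -> st_j s' = J_decided d.
Proof.
case: s => cr ol rl os si ni sj nj tk /= ->.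
case: a => [||[]]; rewrite /= /step_i /step_j /step_task /=; unf; crunch.
Qed.

Lemma monoT a s s' k : Inv s -> stp a s s' -> tM s k <= tM s' k.
Proof.
move=> Hinv; have tkI := iv_task Hinv k; have opI := iv_op Hinv.
case: s Hinv tkI opI => cr ol rl os si ni sj nj tk _ /= tkI opI.
rewrite /tM.
case: a => [||k'].
- clear tkI opI; rewrite /= /step_i; unf; case: si => [|||?|?] /=; crunch; by rewrite leqnn.
- clear tkI opI; rewrite /= /step_j; unf; case: sj => [||||?||?] /=; crunch; by rewrite leqnn.
- rewrite /= /step_task /=; unf.
  case: k k' tkI => [] [] tkI /=.
  all: try (case: tkI => [[E _]|[[E _]|[[r [E _]]|[E _]]]]; simpl in E; rewrite E /=; try rewrite opI /=; crunch; try (rewrite E //)).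
  all: crunch.
Qed.

Lemma updS_eq A (f : side -> A) k x : updS f k x k = x.
Proof. by case: k. Qed.

Lemma P_I01 s s' : stp AgI s s' -> stI s < 2 -> stI s < stI s'.
Proof.
case: s => cr ol rl os si ni sj nj tk; rewrite /= /step_i /stI /=.
by case: si => [|||?|?] //= ->.
Qed.

Lemma P_I3 s s' : stp AgI s s' -> stI s = 3 -> 3 < stI s'.
Proof.
case: s => cr ol rl os si ni sj nj tk; rewrite /= /step_i /stI /=.
case: si => [|||[?|]|?] //= ->; by [].
Qed.

Lemma P_I2 s s' : Inv s -> stp AgI s s' -> stI s = 2 -> 2 < tM s Si -> 2 < stI s'.
Proof.
move=> Hinv Hs E2 Ht.
have R : reslist s Si 1 <> None.
  by case: (iv_task Hinv Si) Ht => [[E _]|[[E _]|[[r [E _]]|[_ [R _]]]]] //; rewrite /tM E.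
have C1 : cnt_i s = 1 by rewrite (iv_cnti Hinv) E2.
clear Hinv Ht; move: Hs E2 R C1; case: s => cr ol rl os si ni sj nj tk /=; rewrite /step_i /stI /=.
case: si => //= Hs _ R C1; move: Hs; rewrite C1.
by case: (rl Si 1) R => // r _ ->.
Qed.

Lemma P_J s s' : stp AgJ s s' -> [|| stJ s < 2, stJ s == 3 | stJ s == 5] -> stJ s < stJ s'.
Proof.
case: s => cr ol rl os si ni sj nj tk; rewrite /= /step_j /stJ /=.
case: sj => [||||?||?] //=; try (by move=> ->); by case=> [[c [_ ->]]|[_ ->]].
Qed.

Lemma P_J2 s s' : Inv s -> stp AgJ s s' -> stJ s = 2 -> 2 < tM s Sj -> 2 < stJ s'.
Proof.
move=> Hinv Hs E2 Ht.
have R : reslist s Sj 1 <> None.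
  by case: (iv_task Hinv Sj) Ht => [[E _]|[[E _]|[[r [E _]]|[_ [R _]]]]] //; rewrite /tM E.
have C1 : cnt_j s = 1 by rewrite (iv_cntj Hinv) E2.
clear Hinv Ht; move: Hs E2 R C1; case: s => cr ol rl os si ni sj nj tk /=; rewrite /step_j /stJ /=.
case: sj => //= Hs _ R C1; move: Hs; rewrite C1.
by case: (rl Sj 1) R => // r _ ->.
Qed.

Lemma P_J4 s s' : Inv s -> stp AgJ s s' -> stJ s = 4 -> 2 < tM s Si -> 4 < stJ s'.
Proof.
move=> Hinv Hs E4 Ht.
have R : reslist s Si 1 <> None.
  by case: (iv_task Hinv Si) Ht => [[E _]|[[E _]|[[r [E _]]|[_ [R _]]]]] //; rewrite /tM E.
have jw := iv_jw Hinv.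
clear Hinv Ht; move: Hs E4 R jw; case: s => cr ol rl os si ni sj nj tk /=; rewrite /step_j /stJ /=.
case: sj => //= c Hs _ R jw; move: Hs; have [-> _] := jw c erefl.
by case: (rl Si 1) R => // [[r|]] _ ->.
Qed.

Lemma P_T k s s' : Inv s -> stp (AgTask k) s s' -> wr s k -> tM s k < 3 -> tM s k < tM s' k.
Proof.
move=> Hinv Hs W Ht.
have o1 : oplist s k 1 = Some (opk k) by rewrite (iv_op Hinv) W.
move: Hs; rewrite /= /step_task.
case: (iv_task Hinv k) => [[E _]|[[E _]|[[r [E _]]|[E _]]]]; rewrite /tM E /= in Ht *.
- by rewrite o1 => ->; rewrite /set_tasks /= updS_eq.
- by case: ifP => _ ->; rewrite /set_tasks /= updS_eq.
- by move=> ->; rewrite /set_tasks /= updS_eq.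
- by [].
Qed.

Variables (cfg : nat -> C) (sched : nat -> agent).
Hypothesis Hrun : is_run valid execute i j op_i op_j v1 v2 S cfg sched.

Lemma stp_all n : stp (sched n) (cfg n) (cfg n.+1).
Proof. by case: Hrun. Qed.

Lemma Inv_all n : Inv (cfg n).
Proof.
elim: n => [|n IH]; first by case: Hrun => -> _; exact: Inv_init.
exact: Inv_step IH (stp_all n).
Qed.

Lemma monof (f : C -> nat) : (forall m, f (cfg m) <= f (cfg m.+1)) ->
  forall n m, n <= m -> f (cfg n) <= f (cfg m).
Proof.
move=> Hm n m /subnKC <-; elim: (m - n) => [|p IH]; first by rewrite addn0.
by rewrite addnS; apply: leq_trans IH (Hm _).
Qed.

Lemma ev (f : C -> nat) a k (P : C -> Prop) :
  inf_often sched a ->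
  (forall m, f (cfg m) <= f (cfg m.+1)) ->
  (forall m, P (cfg m) -> P (cfg m.+1)) ->
  (forall m, P (cfg m) -> f (cfg m) = k -> sched m = a -> k < f (cfg m.+1)) ->
  forall n, P (cfg n) -> k <= f (cfg n) -> exists m, n <= m /\ k < f (cfg m).
Proof.
move=> Hinf Hmono HP Hstep n Pn kn.
have [m [nm Sm]] := Hinf n.
have Pm : P (cfg m).
  move: nm => /subnKC <-; elim: (m - n) => [|p IH]; first by rewrite addn0.
  by rewrite addnS; apply: HP.
have km : k <= f (cfg m) by apply: leq_trans kn (monof Hmono nm).
case: (ltngtP k (f (cfg m))) => [lt|gt|eq].
- by exists m.
- by rewrite ltnNge km in gt.
- by exists m.+1; split; [apply: leq_trans nm _ | apply: Hstep].
Qed.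

Lemma mI m : stI (cfg m) <= stI (cfg m.+1). Proof. exact: monoI (stp_all m). Qed.
Lemma mJ m : stJ (cfg m) <= stJ (cfg m.+1). Proof. exact: monoJ (stp_all m). Qed.
Lemma mT k m : tM (cfg m) k <= tM (cfg m.+1) k. Proof. exact: monoT (Inv_all m) (stp_all m). Qed.

Lemma step_of a m : sched m = a -> stp a (cfg m) (cfg m.+1).
Proof. move=> <-; exact: stp_all. Qed.

Lemma stabI_ge k m : k < stI (cfg m) -> k < stI (cfg m.+1).
Proof. move=> h; exact: leq_trans h (mI m). Qed.
Lemma stabJ_ge k m : k < stJ (cfg m) -> k < stJ (cfg m.+1).
Proof. move=> h; exact: leq_trans h (mJ m). Qed.
Lemma stabT_ge k' k m : k < tM (cfg m) k' -> k < tM (cfg m.+1) k'.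
Proof. move=> h; exact: leq_trans h (mT k' m). Qed.

Lemma taskdone k n : inf_often sched (AgTask k) -> wr (cfg n) k ->
  (forall m, wr (cfg m) k -> wr (cfg m.+1) k) ->
  exists m, n <= m /\ 2 < tM (cfg m) k.
Proof.
move=> HT W0 Wst.
have [m3 [l3 h3]] : exists m, n <= m /\ 0 < tM (cfg m) k.
  apply: (@ev (fun s => tM s k) (AgTask k) 0 (fun s => wr s k));
   [exact: HT | exact: mT | exact: Wst | | exact: W0 | by []].
  by move=> m P e sm; have := P_T (Inv_all m) (step_of sm) P; rewrite e; apply.
have W3 : forall p, n <= p -> wr (cfg p) k.
  move=> p /subnKC <-; elim: (p - n) => [|q IH]; first by rewrite addn0.
  by rewrite addnS; apply: Wst.
have [m4 [l4 h4]] : exists m, m3 <= m /\ 1 < tM (cfg m) k.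
  apply: (@ev (fun s => tM s k) (AgTask k) 1 (fun s => wr s k));
   [exact: HT | exact: mT | exact: Wst | | exact: W3 | by []].
  by move=> m P e sm; have := P_T (Inv_all m) (step_of sm) P; rewrite e; apply.
have [m5 [l5 h5]] : exists m, m4 <= m /\ 2 < tM (cfg m) k.
  apply: (@ev (fun s => tM s k) (AgTask k) 2 (fun s => wr s k));
   [exact: HT | exact: mT | exact: Wst | | apply: W3; exact: leq_trans l3 l4 | by []].
  by move=> m P e sm; have := P_T (Inv_all m) (step_of sm) P; rewrite e; apply.
by exists m5; split => //; apply: leq_trans l3 (leq_trans l4 l5).
Qed.

Lemma termI : inf_often sched AgI -> inf_often sched (AgTask Si) ->
  exists n d, st_i (cfg n) = I_decided d.
Proof.
move=> HI HT.
have [m1 [_ h1]] : exists m, 0 <= m /\ 0 < stI (cfg m).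
  apply: (@ev stI AgI 0 (fun _ => True)); [exact: HI | exact: mI | by [] | | by [] | by []].
  by move=> m _ e sm; have := P_I01 (step_of sm); rewrite e; apply.
have [m2 [l2 h2]] : exists m, m1 <= m /\ 1 < stI (cfg m).
  apply: (@ev stI AgI 1 (fun _ => True)); [exact: HI | exact: mI | by [] | | by [] | by []].
  by move=> m _ e sm; have := P_I01 (step_of sm); rewrite e; apply.
have [m5 [l5 h5]] := taskdone HT h2 (@stabI_ge 1).
have [m6 [l6 h6]] : exists m, m5 <= m /\ 2 < stI (cfg m).
  apply: (@ev stI AgI 2 (fun s => 2 < tM s Si)); [exact: HI | exact: mI | exact: stabT_ge | | by [] | ].
  - by move=> m P e sm; apply: P_I2 (Inv_all m) (step_of sm) e P.
  - exact: leq_trans h2 (monof mI l5).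
have [m7 [l7 h7]] : exists m, m6 <= m /\ 3 < stI (cfg m).
  apply: (@ev stI AgI 3 (fun _ => True)); [exact: HI | exact: mI | by [] | | by [] | by []].
  by move=> m _ e sm; apply: P_I3 (step_of sm) e.
exists m7; move: h7; rewrite /stI; case: (st_i (cfg m7)) => //= d _; by exists d.
Qed.

Lemma termJ : inf_often sched AgJ -> inf_often sched (AgTask Si) -> inf_often sched (AgTask Sj) ->
  exists n d, st_j (cfg n) = J_decided d.
Proof.
move=> HJ HTi HTj.
have [m1 [_ h1]] : exists m, 0 <= m /\ 0 < stJ (cfg m).
  apply: (@ev stJ AgJ 0 (fun _ => True)); [exact: HJ | exact: mJ | by [] | | by [] | by []].
  by move=> m _ e sm; have := P_J (step_of sm); rewrite e; apply.
have [m2 [l2 h2]] : exists m, m1 <= m /\ 1 < stJ (cfg m).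
  apply: (@ev stJ AgJ 1 (fun _ => True)); [exact: HJ | exact: mJ | by [] | | by [] | by []].
  by move=> m _ e sm; have := P_J (step_of sm); rewrite e; apply.
have [m5 [l5 h5]] := taskdone HTj h2 (@stabJ_ge 1).
have [m6 [l6 h6]] : exists m, m5 <= m /\ 2 < stJ (cfg m).
  apply: (@ev stJ AgJ 2 (fun s => 2 < tM s Sj)); [exact: HJ | exact: mJ | exact: stabT_ge | | by [] | ].
  - by move=> m P e sm; apply: P_J2 (Inv_all m) (step_of sm) e P.
  - exact: leq_trans h2 (monof mJ l5).
have [m7 [l7 h7]] : exists m, m6 <= m /\ 3 < stJ (cfg m).
  apply: (@ev stJ AgJ 3 (fun _ => True)); [exact: HJ | exact: mJ | by [] | | by [] | by []].
  by move=> m _ e sm; have := P_J (step_of sm); rewrite e; apply.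
have [m8 [l8 h8]] : exists m, m7 <= m /\ 4 < stJ (cfg m).
  case: (ltngtP 4 (stJ (cfg m7))) => [lt|gt|e4]; first by exists m7.
  - by rewrite ltnNge h7 in gt.
  - have : 1 < stI (cfg m7).
      move: e4; rewrite /stJ; case E: (st_j (cfg m7)) => [||||c||d] //= _.
      by have [_ w] := iv_jw (Inv_all m7) E.
    move=> w; have [m9 [l9 h9]] := taskdone HTi w (@stabI_ge 1).
    have [m10 [l10 h10]] : exists m, m9 <= m /\ 4 < stJ (cfg m).
      apply: (@ev stJ AgJ 4 (fun s => 2 < tM s Si)); [exact: HJ | exact: mJ | exact: stabT_ge | | by [] | ].
      + by move=> m P e sm; apply: P_J4 (Inv_all m) (step_of sm) e P.
      + by rewrite e4; apply: (monof mJ); exact: l9.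
    by exists m10; split => //; exact: leq_trans l9 l10.
have [m11 [l11 h11]] : exists m, m8 <= m /\ 5 < stJ (cfg m).
  apply: (@ev stJ AgJ 5 (fun _ => True)); [exact: HJ | exact: mJ | by [] | | by [] | by []].
  by move=> m _ e sm; have := P_J (step_of sm); rewrite e; apply.
exists m11; move: h11; rewrite /stJ; case: (st_j (cfg m11)) => //= d _; by exists d.
Qed.

Lemma stab_rangeI n d : st_i (cfg n) = I_decided d -> forall p, n <= p -> st_i (cfg p) = I_decided d.
Proof.
move=> h p /subnKC <-; elim: (p - n) => [|q IH]; first by rewrite addn0.
by rewrite addnS; apply: stabI IH (stp_all _).
Qed.

Lemma stab_rangeJ n d : st_j (cfg n) = J_decided d -> forall p, n <= p -> st_j (cfg p) = J_decided d.
Proof.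
move=> h p /subnKC <-; elim: (p - n) => [|q IH]; first by rewrite addn0.
by rewrite addnS; apply: stabJ IH (stp_all _).
Qed.

Lemma agree n m d d' : st_i (cfg n) = I_decided d -> st_j (cfg m) = J_decided d' -> d = d'.
Proof.
move=> hi hj.
have hi' := stab_rangeI hi (leq_maxl n m).
have hj' := stab_rangeJ hj (leq_maxr n m).
have Hinv := Inv_all (maxn n m).
have [r [R ->]] := iv_id Hinv hi'.
have Ro := L_res Hinv R.
case: (iv_jd Hinv hj') => [[-> [|]]|[-> [r' ]]]; rewrite Ro // => -[->] //.
Qed.

Lemma validI n d : st_i (cfg n) = I_decided d -> d = Some v1 \/ d = Some v2.
Proof.
move=> h; have [[r|] [_ ->]] := iv_id (Inv_all n) h; by [left|right].
Qed.

Lemma validJ n d : st_j (cfg n) = J_decided d -> d = Some v1 \/ d = Some v2.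
Proof.
by move=> h; case: (iv_jd (Inv_all n) h) => [[-> _]|[-> _]]; [right|left].
Qed.

End Proof.

Theorem mainTheorem8
  (Op : eqType) (Res Val : Type) (Proc : eqType)
  (valid : seq Op -> Op -> Proc -> bool)
  (execute : seq Op -> Op -> Proc -> Res)
  (S : seq Op) (i j : Proc) (op_i op_j : Op)
  (Hij : i != j)
  (Hopi : op_i \notin S) (Hopj : op_j \notin S)
  (H1 : valid S op_i i = true)
  (H2 : valid S op_j j = true)
  (H3 : valid (rcons S op_j) op_i i = false)
  (H4 : valid (rcons S op_i) op_j j = true)
  (v1 v2 : Val)
  (cfg : nat -> config Op Res Val) (sched : nat -> agent) :
  is_run valid execute i j op_i op_j v1 v2 S cfg sched ->
  admissible sched ->
  (* termination: every correct process decides *)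
  (inf_often sched AgI -> exists n d, st_i (cfg n) = I_decided d) /\
  (inf_often sched AgJ -> exists n d, st_j (cfg n) = J_decided d) /\
  (* agreement *)
  (forall n m d d', st_i (cfg n) = I_decided d -> st_j (cfg m) = J_decided d' -> d = d') /\
  (* validity *)
  (forall n d, st_i (cfg n) = I_decided d -> d = Some v1 \/ d = Some v2) /\
  (forall n d, st_j (cfg n) = J_decided d -> d = Some v1 \/ d = Some v2).
Proof.
move=> Hrun [HTi [HTj _]].
split; [|split; [|split; [|split]]].
- move=> HI; exact: (termI H1 H2 H3 H4 Hrun HI HTi).
- move=> HJ; exact: (termJ H1 H2 H3 H4 Hrun HJ HTi HTj).
- exact: (agree H1 H2 H3 H4 Hrun).
- exact: (validI H1 H2 H3 H4 Hrun).
- exact: (validJ H1 H2 H3 H4 Hrun).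
Qed.
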